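(* Let $w\in\mathbb{R}^n$ have positive entries with $\max_{i,j}w_i/w_j\le b$, let $\widehat W\in\mathbb{R}^n$ have positive entries, set $\rho_{ij}=w_i/w_j$, and let $s_{ij}\ge0$ ($i,j=1,\dots,n$) be such that $$\left[\frac{\widehat W_i}{\widehat W_j}-\rho_{ij}\right]^2\le\rho_{ij}^2\,s_{ij}\quad\text{for all }i,j.$$ Then for every $\ell\in\{1,\dots,n\}$, $\sin(w,\widehat W)^2\le\max_j s_{j\ell}$, and moreover $\sin(w,\widehat W)^2\le b^2 s_{\rm avg}$, where $s_{\rm avg}=\frac1{n^2}\sum_{a,c=1}^n s_{ac}$.
   Context: $\sin(x,y)$ denotes the sine of the angle between nonzero vectors $x,y\in\mathbb{R}^n$. *)

(* Defs.v *)
From mathcomp Require Import all_boot all_order all_algebra.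
Set Implicit Arguments. Unset Strict Implicit. Unset Printing Implicit Defensive.
Import Order.TTheory GRing.Theory Num.Theory.
Local Open Scope ring_scope.

Definition dotv (R : rcfType) (n : nat) (x y : 'rV[R]_n) : R :=
  \sum_(i < n) x 0 i * y 0 i.
Definition normv (R : rcfType) (n : nat) (x : 'rV[R]_n) : R :=
  Num.sqrt (dotv x x).

Definition cosv (R : rcfType) (n : nat) (x y : 'rV[R]_n) : R :=
  dotv x y / (normv x * normv y).
Definition sinv (R : rcfType) (n : nat) (x y : 'rV[R]_n) : R :=
  Num.sqrt (1 - cosv x y ^+ 2).

(* Main.v *)
Require Import Defs.
From mathcomp Require Import all_boot all_order all_algebra.
From mathcomp Require Import ring lra.
Import Order.TTheory GRing.Theory Num.Theory.
Local Open Scope ring_scope.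

Lemma bigmax_ge (R : realDomainType) (I : eqType) (r : seq I) (F : I -> R) i :
  i \in r -> F i <= \big[Num.max/0]_(j <- r) F j.
Proof.
elim: r => [//|a r IH]; rewrite inE big_cons => /orP [/eqP -> | /IH H].
  by rewrite le_max lexx.
by rewrite le_max H orbT.
Qed.

Lemma sin_bound (R : rcfType) (n : nat) (w v : 'rV[R]_n) (t : R) :
  0 < dotv w w -> 0 < dotv v v ->
  sinv w v ^+ 2 <= (\sum_(j < n) (w 0 j - t * v 0 j) ^+ 2) / dotv w w.
Proof.
move=> hD hE.
set D := dotv w w; set E := dotv v v; set P := dotv w v.
have eQ : \sum_(j < n) (w 0 j - t * v 0 j) ^+ 2 = D - 2 * t * P + t ^+ 2 * E.
  rewrite /D /P /E /dotv mulr_sumr mulr_sumr -sumrB -big_split /=.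
  by apply: eq_bigr => j _; ring.
rewrite eQ /sinv /cosv /normv -/D -/E -/P.
have Q0 : 0 <= (D - 2 * t * P + t ^+ 2 * E) / D.
  rewrite -eQ divr_ge0 ?(ltW hD) //; apply: sumr_ge0 => j _; exact: sqr_ge0.
case: (leP (1 - (P / (Num.sqrt D * Num.sqrt E)) ^+ 2) 0) => h.
  by rewrite ler0_sqrtr // expr0n.
rewrite sqr_sqrtr ?(ltW h) // expr_div_n exprMn !sqr_sqrtr ?(ltW hD) ?(ltW hE) //.
rewrite -subr_ge0.
have -> : (D - 2 * t * P + t ^+ 2 * E) / D - (1 - P ^+ 2 / (D * E))
   = (t * E - P) ^+ 2 / (D * E).
  by field; rewrite ?gt_eqF.
by rewrite divr_ge0 ?sqr_ge0 // ltW // mulr_gt0.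
Qed.

Theorem lemma7 (R : rcfType) (n : nat) (hn : (0 < n)%N)
  (w What : 'rV[R]_n) (b : R) (s : 'I_n -> 'I_n -> R)
  (hw : forall i, 0 < w 0 i)
  (hb : forall i j, w 0 i / w 0 j <= b)
  (hW : forall i, 0 < What 0 i)
  (hs0 : forall i j, 0 <= s i j)
  (hs : forall i j,
      (What 0 i / What 0 j - w 0 i / w 0 j) ^+ 2
        <= (w 0 i / w 0 j) ^+ 2 * s i j) :
  (forall l : 'I_n, sinv w What ^+ 2 <= \big[Num.max/0]_(j < n) s j l) /\
  sinv w What ^+ 2
    <= b ^+ 2 * ((n%:R ^+ 2)^-1 * \sum_(a < n) \sum_(c < n) s a c).
Proof.
have pos (x : 'rV[R]_n) : (forall i, 0 < x 0 i) -> 0 < dotv x x.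
  move=> hx; rewrite /dotv (bigD1 (Ordinal hn)) //=.
  apply: ltr_wpDr; first by apply: sumr_ge0 => j _; rewrite -expr2 sqr_ge0.
  by rewrite mulr_gt0.
have hD := pos w hw; have hE := pos What hW.
set D := dotv w w.
have hl : forall l, sinv w What ^+ 2 <= (\sum_(j < n) w 0 j ^+ 2 * s j l) / D.
  move=> l; apply: le_trans (@sin_bound _ _ w What (w 0 l / What 0 l) hD hE) _.
  rewrite ler_wpM2r ?invr_ge0 ?(ltW hD) //; apply: ler_sum => j _.
  have wl0 := hw l; have Wl0 := hW l; have wj0 := hw j.
  have -> : (w 0 j - w 0 l / What 0 l * What 0 j) ^+ 2
     = w 0 l ^+ 2 * (What 0 j / What 0 l - w 0 j / w 0 l) ^+ 2.
    by field; rewrite !gt_eqF.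
  have -> : w 0 j ^+ 2 * s j l = w 0 l ^+ 2 * ((w 0 j / w 0 l) ^+ 2 * s j l).
    by field; rewrite !gt_eqF.
  by rewrite ler_wpM2l ?sqr_ge0.
split.
  move=> l; apply: le_trans (hl l) _.
  rewrite ler_pdivrMr // /D /dotv mulr_sumr; apply: ler_sum => j _.
  rewrite -expr2 [X in _ <= X]mulrC ler_wpM2l ?sqr_ge0 //.
  exact: (@bigmax_ge _ _ _ (fun j => s j l) j (mem_index_enum j)).
have hb0 : forall j, n%:R * w 0 j ^+ 2 <= b ^+ 2 * D.
  move=> j; rewrite /D /dotv mulr_sumr -[n in n%:R]card_ord -sumr_const.
  rewrite mulr_suml; apply: ler_sum => k _; rewrite mul1r.
  have wk := hw k; have wj := hw j.
  have h1 : w 0 j <= b * w 0 k by rewrite -ler_pdivrMr // hb.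
  rewrite -expr2 -exprMn expr2 [X in _ <= X]expr2.
  by apply: ler_pM => //; apply: ltW.
have hn0 : 0 < n%:R :> R by rewrite ltr0n.
have step : n%:R * sinv w What ^+ 2
    <= \sum_(l < n) (\sum_(j < n) w 0 j ^+ 2 * s j l) / D.
  rewrite -[n in n%:R]card_ord -sumr_const mulr_suml; apply: ler_sum => l _; rewrite mul1r; exact: hl.
have step2 : \sum_(l < n) (\sum_(j < n) w 0 j ^+ 2 * s j l) / D
    <= b ^+ 2 / n%:R * \sum_(a < n) \sum_(c < n) s a c.
  rewrite exchange_big /= mulr_sumr; apply: ler_sum => j _.
  rewrite mulr_suml mulr_sumr; apply: ler_sum => l _.
  rewrite mulrAC ler_wpM2r //.
  rewrite ler_pdivrMr // mulrAC ler_pdivlMr // mulrC. exact: hb0.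
rewrite -(ler_pM2l hn0); apply: le_trans step (le_trans step2 _).
rewrite le_eqVlt; apply/orP; left; apply/eqP; field; rewrite pnatr_eq0 -lt0n hn. by [].
Qed.
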